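(* Let $\{X_1,X_2,\dots\}$ be a random dense countable subset of $(0,1)$ satisfying the independence condition and such that for every Borel set $B\subset(0,1)$ of positive Lebesgue measure, $B\cap\{X_1,X_2,\dots\}\ne\emptyset$ a.s. Then for every Borel set $B\subset(0,1)$ of positive Lebesgue measure, $\Pr\big(\{X_2,X_3,\dots\}\cap B\ne\emptyset \,\big|\, X_1\big)=1$ almost surely.
   Context: A random countable subset of $(0,1)$ is given by random variables $X_1,X_2,\dots:\Omega\to(0,1)$ on a probability space, the set being $\omega\mapsto\{X_1(\omega),X_2(\omega),\dots\}$. It is dense if this set is dense in $(0,1)$ for a.e. $\omega$. Two random countable sets $\{X_k\},\{Y_k\}$ are identically distributed if some probability measure on $(0,1)^\infty\times(0,1)^\infty$ has marginals the laws of $(X_k)_k$ and $(Y_k)_k$ and is concentrated on pairs $(x,y)$ with $\{x_1,x_2,\dots\}=\{y_1,y_2,\dots\}$. Independence condition. For every $n\ge2$ and every $0=a_0<\dots<a_n=1$ there exist random variables $Y_{i,j}$ ($i\le n$, $j\ge1$) on some probability space such that: - $\{Y_{i,j}\}$ is distributed like $\{X_k\}$; - $Y_{i,j}\in[a_{i-1},a_i)$ a.s.; - the sequences $(Y_{i,j})_j$ are independent. *)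

(* Defs.v *)
From HB Require Import structures.
From mathcomp Require Import all_boot all_order all_algebra.
From mathcomp Require Import all_classical all_reals all_analysis.

Set Implicit Arguments.
Unset Strict Implicit.
Unset Printing Implicit Defensive.

Import Order.TTheory GRing.Theory Num.Theory.
Import numFieldNormedType.Exports.

Local Open Scope classical_set_scope.
Local Open Scope ring_scope.

Definition seq_gen (R : realType) : set (set (nat -> R)) :=
  \bigcup_(k in [set: nat])
    preimage_set_system setT (fun x : nat -> R => x k) measurable.

Definition Rseq (R : realType) := g_sigma_algebraType (@seq_gen R).

Definition rseq (R : realType) (T : Type) (X : nat -> T -> R) : T -> Rseq R :=
  fun w k => X k w.

(* Two random countable sets {X_k} (on (T1,P1)) and {Y_k} (on (T2,P2)) are
   identically distributed: some probability measure on R^N x R^N has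
   marginals the laws of (X_k)_k and (Y_k)_k and is concentrated on pairs
   (x,y) with {x_1,x_2,...} = {y_1,y_2,...}. *)
Definition same_set_law (R : realType)
    (d1 : measure_display) (T1 : measurableType d1) (P1 : probability T1 R)
    (X : nat -> T1 -> R)
    (d2 : measure_display) (T2 : measurableType d2) (P2 : probability T2 R)
    (Y : nat -> T2 -> R) : Prop :=
  exists mu : probability (Rseq R * Rseq R)%type R,
    [/\ (forall A : set (Rseq R), measurable A ->
           mu (fst @^-1` A) = P1 (rseq X @^-1` A)),
        (forall A : set (Rseq R), measurable A ->
           mu (snd @^-1` A) = P2 (rseq Y @^-1` A)) &
        {ae mu, forall xy : Rseq R * Rseq R,
           range (xy.1 : nat -> R) = range (xy.2 : nat -> R)}].

Definition indep_seqs (R : realType) (d : measure_display)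
    (T : measurableType d) (P : probability T R) (n : nat)
    (Y : 'I_n -> nat -> T -> R) : Prop :=
  forall A : 'I_n -> set (Rseq R), (forall i, measurable (A i)) ->
    P (\bigcap_(i in [set: 'I_n]) (rseq (Y i) @^-1` A i)) =
    (\prod_(i < n) P (rseq (Y i) @^-1` A i))%E.

(* The independence condition (indices shifted to start at 0):
   for n >= 2 and 0 = a_0 < ... < a_n = 1 there are random variables
   Y i j (i < n, j in N; values of Y for i >= n are irrelevant) on some probability space, with {Y i j} distributed
   like {X_k} (enumerated as k |-> Y (k mod n) (k div n)),
   Y i j in [a_i, a_(i+1)) a.s., and the sequences (Y i j)_j independent. *)
Definition independence_condition (R : realType) (d : measure_display)
    (T : measurableType d) (P : probability T R) (X : nat -> T -> R) : Prop :=
  forall (n : nat) (a : nat -> R), (2 <= n)%N -> a 0%N = 0 -> a n = 1 ->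
    (forall i, (i < n)%N -> a i < a i.+1) ->
    exists (d' : measure_display) (T' : measurableType d')
           (P' : probability T' R) (Y : nat -> nat -> T' -> R),
      [/\ (forall i j, (i < n)%N -> measurable_fun setT (Y i j)),
          same_set_law P' (fun k => Y (k %% n)%N (k %/ n)%N) P X,
          (forall i j, (i < n)%N -> {ae P', forall w, a i <= Y i j w < a i.+1}) &
          indep_seqs P' (fun i : 'I_n => Y (nat_of_ord i))].

Definition cond_prob_version (R : realType) (d : measure_display)
    (T : measurableType d) (P : probability T R) (X1 : T -> R) (E : set T)
    (h : R -> R) : Prop :=
  [/\ measurable_fun setT h,
      P.-integrable setT (EFin \o (h \o X1)) &
      forall A : set R, measurable A ->
        (\int[P]_(w in X1 @^-1` A) (h (X1 w))%:E = P (E `&` X1 @^-1` A))%E].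

(* Main.v *)
Require Import Defs.
From HB Require Import structures.
From mathcomp Require Import all_boot all_order all_algebra.
From mathcomp Require Import all_classical all_reals all_analysis.
From mathcomp Require Import measurable_realfun.

Import Order.TTheory GRing.Theory Num.Theory.
Import numFieldNormedType.Exports.

Local Open Scope classical_set_scope.
Local Open Scope ring_scope.

Lemma split_pos (R : realType) (B : set R) : measurable B ->
  B `<=` `]0, 1[%classic -> (0 < lebesgue_measure B)%E ->
  exists a : R, (0 < lebesgue_measure (B `&` `]-oo, a[))%E /\
                (0 < lebesgue_measure (B `&` `[a, +oo[))%E.
Proof.
move=> mB B01 B0.
have itvm (x y : R) : x < y -> lebesgue_measure (`[x, y[%classic : set R) = (y - x)%:E.
  by move=> xy; rewrite lebesgue_measure_itv/= lte_fin xy -EFinD.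
have Ble1 : (lebesgue_measure B <= 1%:E)%E.
  apply: (@le_trans _ _ (lebesgue_measure (`]0, 1[%classic : set R))).
    by apply: le_measure => //; rewrite inE.
  rewrite lebesgue_measure_itv/= lte_fin ltr01. by rewrite oppr0 adde0.
set m := fine (lebesgue_measure B).
have mE : lebesgue_measure B = m%:E.
  by rewrite fineK // ge0_fin_numE ?measure_ge0 // (le_lt_trans Ble1) ?ltry.
have m0 : 0 < m by rewrite -lte_fin -mE.
set N := (Num.truncn m^-1).+1.
have N0 : (0 < N%:R :> R) by rewrite ltr0n.
have hN : N%:R^-1 < m.
  rewrite -(invrK m) ltf_pV2 ?posrE ?invr_gt0 //.
  exact: truncnS_gt.
pose G j := lebesgue_measure (B `&` `]-oo, j%:R / N%:R[).
have G0 : G 0%N = 0%E.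
  rewrite /G mul0r (_ : _ `&` _ = set0) ?measure0 //.
  apply/seteqP; split => x //= [/B01]; rewrite /= !in_itv /= => /andP[x0 _].
  by rewrite ltNge (ltW x0).
have GN : G N != 0%E.
  rewrite /G divff ?pnatr_eq0 // setIidl ?mE ?eqe ?(gt_eqF m0) //.
  by move=> x /B01; rewrite /= !in_itv /= => /andP[].
have [j [Gj GSj]] : exists j, G j = 0%E /\ G j.+1 != 0%E.
  have [//|H] := pselect (exists j, G j = 0%E /\ G j.+1 != 0%E).
  have H' : forall j, G j = 0%E by elim => // j IH; apply/eqP; apply: contraT => hj; exfalso; apply: H; exists j.
  by move: GN; rewrite H' eqxx.
have meas1 (a : R) : measurable (B `&` `]-oo, a[%classic) by apply: measurableI.
have meas2 (a : R) : measurable (B `&` `[a, +oo[%classic) by apply: measurableI.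
exists (j.+1%:R / N%:R); split.
  by rewrite lt0e GSj measure_ge0.
rewrite lt0e measure_ge0 andbT; apply/eqP => H2.
have BU : B = (B `&` `]-oo, j.+1%:R / N%:R[) `|` (B `&` `[j.+1%:R / N%:R, +oo[).
  apply/seteqP; split => x /=; last by case=> -[].
  move=> Bx; rewrite !in_itv /= andbT.
  by case: (ltP x (j.+1%:R / N%:R)) => xa; [left|right].
have : lebesgue_measure B = G j.+1.
  rewrite {1}BU measureU; [|exact: meas1|exact: meas2|].
    by move: H2 => /= ->; rewrite adde0.
  apply/seteqP; split => x //= [[_]]; rewrite !in_itv /= andbT => + [_].
  by move=> h1 h2; move: (lt_le_trans h1 h2); rewrite ltxx.
have Gle : (G j.+1 <= G j + (N%:R^-1)%:E)%E.
  have jlt : j%:R / N%:R < j.+1%:R / N%:R :> R by rewrite ltr_pM2r ?invr_gt0 // ltr_nat.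
  rewrite -(_ : j.+1%:R / N%:R - j%:R / N%:R = N%:R^-1); last first.
    by rewrite -mulrBl -natrB // subSnn mul1r.
  rewrite -itvm //.
  apply: (le_trans _ (measureU2 lebesgue_measure (meas1 (j%:R / N%:R)) (measurable_itv `[(j%:R / N%:R), (j.+1%:R / N%:R)[))).
  apply: le_measure; rewrite ?inE //; [exact: meas1|apply: measurableU; [exact: meas1|exact: measurable_itv]|].
  move=> x [Bx]; rewrite /= !in_itv /= => xa.
  by case: (ltP x (j%:R / N%:R)) => xj; [left|right; rewrite xa].
rewrite mE => hm; move: Gle; rewrite Gj add0e -hm lee_fin => /(lt_le_trans hN).
by rewrite ltxx.
Qed.

Lemma int_one (d : measure_display) (T : measurableType d) (R : realType)
  (P : probability T R) (f : T -> R) (S : set T) :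
  measurable S -> measurable_fun S f -> P.-integrable S (EFin \o f) ->
  (\int[P]_(w in S) (f w)%:E = P S)%E ->
  ((forall w, S w -> 1 < f w) \/ (forall w, S w -> f w < 1)) -> P S = 0%E.
Proof.
move=> mS mf intf hI HS.
have i1 := finite_measure_integrable_cst P 1 mS.
have PSfin : P S \is a fin_num by rewrite ge0_fin_numE ?measure_ge0 // (le_lt_trans (probability_le1 P mS)) ?ltry.
pose s : R := if `[< forall w, S w -> 1 < f w >] then 1 else -1.
pose g w := s * (f w - 1).
have gpos w : S w -> 0 <= g w.
  move=> Sw; rewrite /g /s; case: asboolP => H.
    by rewrite mul1r subr_ge0 ltW // H.
  case: HS => HS; first by exfalso.
  by rewrite mulN1r oppr_ge0 subr_le0 ltW // HS.
have mg : measurable_fun S ((EFin \o g) : T -> \bar R).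
  apply/measurable_EFinP; rewrite /g.
  apply: measurable_funM => //; apply: measurable_funB => //.
have : (\int[P]_(w in S) `|(g w)%:E| = 0)%E.
  have ig : (\int[P]_(w in S) (g w)%:E = s%:E * (\int[P]_(w in S) ((f w)%:E - (cst 1 w)%:E)))%E.
    rewrite -integralZl //; last exact: (integrableB mS intf i1).

  have -> : (\int[P]_(w in S) `|(g w)%:E| = \int[P]_(w in S) (g w)%:E)%E.
    by apply: eq_integral => w; rewrite inE => Sw; rewrite gee0_abs // lee_fin gpos.
  have c1 : (\int[P]_(w in S) (cst 1 w)%:E = P S)%E.
    by have := integral_cst P mS 1; rewrite mul1e => <-; apply: eq_integral.
  rewrite ig integralB_EFin // hI c1 subee // mule0 //.
move/(ae_eq_integral_abs P mS mg).
have gnz w : S w -> g w != 0.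
  move=> Sw; rewrite /g /s; case: asboolP => H.
    by rewrite mul1r subr_eq0 gt_eqF // H.
  case: HS => HS; first by exfalso.
  by rewrite mulN1r oppr_eq0 subr_eq0 lt_eqF // HS.
case=> N [mN PN0 sub].
apply/eqP; rewrite -measure_le0 -PN0; apply: le_measure; rewrite ?inE //.
move=> w Sw; apply: sub => /= H.
by move: (H Sw) => /eqP; rewrite eqe; apply/negP; exact: gnz.
Qed.

(* X k is X_{k+1} of the paper; X 0 = X_1. *)
Theorem lemma5p7 (R : realType) (d : measure_display) (T : measurableType d)
    (P : probability T R) (X : nat -> T -> R)
    (X_meas : forall k, measurable_fun setT (X k))
    (X_01 : forall k w, 0 < X k w < 1)
    (X_dense : {ae P, forall w, `]0, 1[%classic `<=` closure (range (X ^~ w))})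
    (X_indep : independence_condition P X)
    (X_hit : forall B : set R, measurable B -> B `<=` `]0, 1[%classic ->
        (0 < lebesgue_measure B)%E ->
        {ae P, forall w, exists k, B (X k w)}) :
  forall B : set R, measurable B -> B `<=` `]0, 1[%classic ->
    (0 < lebesgue_measure B)%E ->
    forall h : R -> R,
      cond_prob_version P (X 0%N) [set w | exists2 k, (1 <= k)%N & B (X k w)] h ->
      {ae P, forall w, h (X 0%N w) = 1}.
Proof.
move=> B mB B01 B0 h [mh ih hint].
have [a [Ba1 Ba2]] := @split_pos _ B mB B01 B0.
have mB1 : measurable (B `&` `]-oo, a[%classic) by apply: measurableI => //; exact: measurable_itv.
have mB2 : measurable (B `&` `[a, +oo[%classic) by apply: measurableI => //; exact: measurable_itv.
have h1 := X_hit _ mB1 (subset_trans (@subIsetl _ _ _) B01) Ba1.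
have h2 := X_hit _ mB2 (subset_trans (@subIsetl _ _ _) B01) Ba2.
set E := [set w | exists2 k, (1 <= k)%N & B (X k w)].
have mX k (A : set R) : measurable A -> measurable (X k @^-1` A).
  by move=> mA; rewrite -[X in measurable X]setTI; exact: X_meas.
have mE : measurable E.
  rewrite (_ : E = \bigcup_k (X k.+1 @^-1` B)); first by apply: bigcupT_measurable => k; exact: mX.
  apply/seteqP; split => w /=; first by case=> -[|k] // _ ?; exists k.
  by case=> k _ ?; exists k.+1.
have aeE : {ae P, forall w, E w}.
  apply: filterS2 h1 h2 => w [k1 [Bk1 ak1]] [k2 [Bk2 ak2]].
  case: k1 Bk1 ak1 => [|k1] Bk1 ak1; last by exists k1.+1.
  case: k2 Bk2 ak2 => [|k2] Bk2 ak2; last by exists k2.+1.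
  move: ak1 ak2; rewrite /= !in_itv /= andbT => h3 h4.
  by move: (lt_le_trans h3 h4); rewrite ltxx.
have PnE : P (~` E) = 0%E.
  case: aeE => N [mN PN0 sub].
  apply/eqP; rewrite -measure_le0 -PN0; apply: le_measure; rewrite ?inE //; try exact: measurableC.
have PES (S : set T) : measurable S -> P (E `&` S) = P S.
  move=> mS; rewrite (measureDI P mS mE) setIC.
  rewrite [X in (X + _)%E](_ : _ = 0%E) ?add0e //.
    apply/eqP; rewrite -measure_le0 -PnE; apply: le_measure; rewrite ?inE //;
      first [exact: measurableD | exact: measurableC | by move=> w [] ].
have mhp (A : set R) : measurable A -> measurable (h @^-1` A).
  by move=> mA; rewrite -[X in measurable X]setTI; exact: mh.
have key (A : set R) : measurable A ->
    (forall x, A x -> 1 < h x) \/ (forall x, A x -> h x < 1) ->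
    P (X 0%N @^-1` A) = 0%E.
  move=> mA HA.
  apply: (@int_one _ T R P (h \o X 0%N)).
  - exact: mX.
  - apply: measurable_funS (measurableT_comp mh (X_meas 0%N)) => //.
  - apply: integrableS ih => //; exact: mX.
  - by rewrite hint // PES //; exact: mX.
  - by case: HA => H; [left|right] => w /H.
have n1 : P.-negligible (X 0%N @^-1` (h @^-1` `]1, +oo[%classic)).
  apply/negligibleP; first by apply: mX; apply: mhp; exact: measurable_itv.
  apply: key; first by apply: mhp; exact: measurable_itv.
  by left => x; rewrite /= in_itv /= andbT.
have n2 : P.-negligible (X 0%N @^-1` (h @^-1` `]-oo, 1[%classic)).
  apply/negligibleP; first by apply: mX; apply: mhp; exact: measurable_itv.
  apply: key; first by apply: mhp; exact: measurable_itv.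
  by right => x; rewrite /= in_itv /=.
apply: negligibleS (negligibleU n1 n2).
move=> w /= hw; rewrite !in_itv /= andbT.
by case: (ltgtP (h (X 0%N w)) 1) => // H; [right|left].
Qed.
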